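(* Let $0<\alpha<d$, $\mathcal{B}_\alpha\in\{\mathcal{B}^c_\alpha,\mathcal{B}^u_\alpha\}$ and $f\in L^1_{\mathrm{loc}}(\mathbb{R}^d)$. Then for each $B\in\mathcal{B}_\alpha$ we have $f_{Q_B}\sim f_B$ and $\ell(Q_B)\sim r(B)$, i.e. $C^{-1}f_B\le f_{Q_B}\le Cf_B$ and $C^{-1}r(B)\le \ell(Q_B)\le C r(B)$ with a constant $C$ depending only on $d$.
   Context: $f_B=\frac1{|B|}\int_B|f|$ for a ball or cube $B$; $r(B)$ is the radius of a ball, $\ell(Q)$ the sidelength of a cube, $\overline B$ the closure. Fix $3^d$ (translated) dyadic grids $\mathcal{D}_1,\dots,\mathcal{D}_{3^d}$ such that every ball $B$ is contained in some cube of $\mathcal{D}=\mathcal{D}_1\cup\dots\cup\mathcal{D}_{3^d}$ of sidelength at most $C_d\,r(B)$; for each ball $B$ let $Q_B$ be such a cube. $\mathrm{M}^c_\alpha f(x)=\sup_{r>0}r^\alpha f_{B(x,r)}$, $\mathrm{M}^u_\alpha f(x)=\sup_{B\ni x}r(B)^\alpha f_B$. $\mathcal{B}^c_\alpha(x)=\{B(x,r)\}$ with $r$ the largest radius with $\mathrm{M}^c_\alpha f(x)=r^\alpha f_{B(x,r)}$; $\mathcal{B}^u_\alpha(x)$ is the set of balls $B$ with $x\in\overline B$, $r(B)^\alpha f_B=\mathrm{M}^u_\alpha f(x)$ and $r(A)^\alpha f_A<\mathrm{M}^u_\alpha f(x)$ for all balls $A\supsetneq B$. $\mathcal{B}^c_\alpha=\bigcup_x\mathcal{B}^c_\alpha(x)$,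 $\mathcal{B}^u_\alpha=\bigcup_x\mathcal{B}^u_\alpha(x)$. *)

(* Defs.v *)
(* R^d is modelled as d.-tuple R with the product
   (= Borel) sigma-algebra shipped by MathComp-Analysis. *)
From HB Require Import structures.
From mathcomp Require Import all_boot all_order all_algebra.
From mathcomp Require Import all_classical all_reals all_analysis.
Set Implicit Arguments. Unset Strict Implicit. Unset Printing Implicit Defensive.
Import Order.TTheory GRing.Theory Num.Theory.
Local Open Scope classical_set_scope.
Local Open Scope ring_scope.

Section Defs.
Variables (R : realType) (d : nat).
Local Notation pt := (d.-tuple R).

Definition edist (x y : pt) : R :=
  Num.sqrt (\sum_(i < d) (tnth x i - tnth y i) ^+ 2).

Definition ballS (c : pt) (r : R) : set pt := [set y | edist y c < r].
Definition cballS (c : pt) (r : R) : set pt := [set y | edist y c <= r].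

Definition cubeS (a : pt) (l : R) : set pt :=
  [set y | forall i, tnth a i <= tnth y i < tnth a i + l].

(* mu is Lebesgue measure on R^d: the (unique) measure on the Borel sets
   giving every half-open box its volume *)
Definition is_lebesgue (mu : {measure set pt -> \bar R}) : Prop :=
  forall a b : pt, (forall i, tnth a i <= tnth b i) ->
    mu [set y | forall i, tnth a i <= tnth y i < tnth b i] =
    (\prod_(i < d) (tnth b i - tnth a i))%:E.

Definition L1loc (mu : {measure set pt -> \bar R}) (f : pt -> R) : Prop :=
  measurable_fun setT f /\
  forall c r, 0 < r -> mu.-integrable (ballS c r) (fun y => (f y)%:E).

Definition avg (mu : {measure set pt -> \bar R}) (f : pt -> R) (A : set pt) : R :=
  fine (\int[mu]_(y in A) `|f y|%:E)%E / fine (mu A).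

Definition bval mu alpha f (c : pt) (r : R) : R :=
  r `^ alpha * avg mu f (ballS c r).

Definition Mc mu alpha f (x : pt) : \bar R :=
  ereal_sup [set (bval mu alpha f x r)%:E | r in [set r : R | 0 < r]].
Definition Mu mu alpha f (x : pt) : \bar R :=
  ereal_sup [set (bval mu alpha f cr.1 cr.2)%:E |
             cr in [set cr : pt * R | 0 < cr.2 /\ ballS cr.1 cr.2 x]].

Definition inBc_at mu alpha f (x : pt) (c : pt) (r : R) : Prop :=
  [/\ c = x, 0 < r, (bval mu alpha f x r)%:E = Mc mu alpha f x &
      forall r', 0 < r' -> (bval mu alpha f x r')%:E = Mc mu alpha f x -> r' <= r].

Definition inBu_at mu alpha f (x : pt) (c : pt) (r : R) : Prop :=
  [/\ 0 < r, cballS c r x, (bval mu alpha f c r)%:E = Mu mu alpha f x &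
      forall c' r', 0 < r' -> ballS c r `<=` ballS c' r' ->
        ballS c r <> ballS c' r' ->
        ((bval mu alpha f c' r')%:E < Mu mu alpha f x)%E].

Definition inBc mu alpha f c r := exists x, inBc_at mu alpha f x c r.
Definition inBu mu alpha f c r := exists x, inBu_at mu alpha f x c r.

(* translated dyadic grid D^t = { 2^{-k}([0,1)^d + m + (-1)^k t) : k in Z, m in Z^d },
   cubes encoded by (lower corner, side length) *)
Definition in_grid (t : pt) (Q : pt * R) : Prop :=
  exists (k : int) (m : d.-tuple int),
    Q.2 = 2%:R ^ (- k) /\
    forall i, tnth Q.1 i = 2%:R ^ (- k) * ((tnth m i)%:~R + (-1) ^ k * tnth t i).

Definition in_D (t : 'I_(3 ^ d) -> pt) (Q : pt * R) : Prop :=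
  exists i, in_grid (t i) Q.

End Defs.

(* Main.v *)
Require Import Defs.
From HB Require Import structures.
From mathcomp Require Import all_boot all_order all_algebra.
From mathcomp Require Import all_classical all_reals all_analysis.
From mathcomp Require Import measurable_realfun ring lra.
Import Order.TTheory GRing.Theory Num.Theory.
Local Open Scope classical_set_scope.
Local Open Scope ring_scope.

Section Helpers.
Variables (R : realType) (d : nat).
Local Notation pt := (d.-tuple R).

Definition L4_sqd (c y : pt) : R := \sum_(i < d) (tnth y i - tnth c i) ^+ 2.

Lemma L4_sq_ge0 c y : 0 <= L4_sqd c y.
Proof. by apply: sumr_ge0 => i _; apply: sqr_ge0. Qed.

Lemma L4_ballSE (c : pt) (r : R) : 0 < r -> ballS c r = [set y | L4_sqd c y < r ^+ 2].
Proof.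
move=> r0; apply/seteqP; split => y /=; rewrite /edist -/(L4_sqd c y).
- move=> H; rewrite -(sqr_sqrtr (L4_sq_ge0 c y)).
  by rewrite ltr_pXn2r // ?nnegrE ?sqrtr_ge0 // ltW.
- move=> H; rewrite /ballS /edist /= -/(L4_sqd c y) -(ger0_norm (ltW r0)) -sqrtr_sqr ltr_sqrt //.
  by rewrite exprn_gt0.
Qed.

Lemma L4_measurable_boxP (P : 'I_d -> set R) :
  (forall i, measurable (P i)) -> measurable [set y : pt | forall i, P i (tnth y i)].
Proof.
move=> mP.
pose F := fun k : nat => match insub k : option 'I_d with
  | Some i => [set y : pt | P i (tnth y i)] | None => setT end.
have -> : [set y : pt | forall i, P i (tnth y i)] = \bigcap_(k in setT) F k.
  apply/seteqP; split => y /=.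
  - move=> H k _; rewrite /F; case: insubP => [i _ _|_] //=.
  - move=> H i; have := H (val i) I; by rewrite /F valK.
apply: bigcap_measurable; first by exists 0%N.
move=> k _; rewrite /F; case: insub => [i|] //=.
have := measurable_tnth i measurableT (mP i); by rewrite setTI.
Qed.

Lemma L4_measurable_box (a b : pt) :
  measurable [set y : pt | forall i, tnth a i <= tnth y i < tnth b i].
Proof.
have H := L4_measurable_boxP (fun i x => tnth a i <= x < tnth b i).
apply: H => i.
have -> : (fun x : R => (tnth a i <= x < tnth b i : Prop)) = [set` `[tnth a i, tnth b i[].
  by apply/seteqP; split => x /=; rewrite in_itv.
exact: measurable_itv.
Qed.

Lemma L4_measurable_box2 (a : pt) (l : R) :
  measurable [set y : pt | forall i, tnth a i <= tnth y i < tnth a i + l].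
Proof.
pose b : pt := [tuple tnth a i + l | i < d].
have := L4_measurable_box a b.
have -> // : [set y : pt | forall i, tnth a i <= tnth y i < tnth b i] =
          [set y | forall i, tnth a i <= tnth y i < tnth a i + l].
by apply/seteqP; split => y /= H i; have := H i; rewrite tnth_mktuple.
Qed.

Lemma L4_measurable_ball (c : pt) r : 0 < r -> measurable (ballS c r).
Proof.
move=> r0; rewrite L4_ballSE //.
have ms : measurable_fun setT (L4_sqd c).
  rewrite /L4_sqd; apply: measurable_sum => i.
  apply: measurable_funX; apply: measurable_funB; last exact: measurable_cst.
  exact: measurable_tnth.
have := ms measurableT _ (measurable_itv `]-oo, r ^+ 2[); rewrite setTI.
suff -> : [set y | L4_sqd c y < r ^+ 2] = L4_sqd c @^-1` [set` `]-oo, r ^+ 2[] by [].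
by apply/seteqP; split => x /=; rewrite in_itv.
Qed.


Lemma L4_term_le_sq (c y : pt) i : (tnth y i - tnth c i) ^+ 2 <= L4_sqd c y.
Proof.
rewrite /L4_sqd (bigD1 i) //= lerDl; apply: sumr_ge0 => j _; exact: sqr_ge0.
Qed.

Lemma L4_box_meas (mu : {measure set pt -> \bar R}) : is_lebesgue mu ->
  forall (a : pt) (l : R), 0 <= l ->
  mu [set y | forall i, tnth a i <= tnth y i < tnth a i + l] = (l ^+ d)%:E.
Proof.
move=> hmu a l l0.
pose b : pt := [tuple tnth a i + l | i < d].
have hab : forall i, tnth a i <= tnth b i by move=> i; rewrite tnth_mktuple lerDl.
have := hmu a b hab.
have -> : [set y : pt | forall i, tnth a i <= tnth y i < tnth b i] =
          [set y | forall i, tnth a i <= tnth y i < tnth a i + l].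
  by apply/seteqP; split => y /= H i; have := H i; rewrite tnth_mktuple.
move=> ->; congr EFin.
under eq_bigr => i _ do rewrite tnth_mktuple addrAC subrr add0r.
by rewrite prodr_const card_ord.
Qed.

Lemma L4_cube_meas (mu : {measure set pt -> \bar R}) : is_lebesgue mu ->
  forall (a : pt) (l : R), 0 <= l -> mu (cubeS a l) = (l ^+ d)%:E.
Proof. by move=> hmu a l l0; rewrite /cubeS L4_box_meas. Qed.

Lemma L4_ball_sub_box (c : pt) (rho : R) : 0 < rho ->
  ballS c rho `<=` [set y | forall i, tnth [tuple tnth c j - rho | j < d] i <= tnth y i <
                     tnth [tuple tnth c j - rho | j < d] i + 2 * rho].
Proof.
move=> r0; rewrite L4_ballSE // => y /= H i; rewrite tnth_mktuple.
have := le_lt_trans (L4_term_le_sq c y i) H.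
set x := tnth y i - tnth c i => hx.
have h1 : - rho < x by nra.
have h2 : x < rho by nra.
rewrite /x in h1 h2; apply/andP; split; lra.
Qed.

Lemma L4_ball_le (mu : {measure set pt -> \bar R}) : is_lebesgue mu ->
  forall (c : pt) (rho : R), 0 < rho -> (mu (ballS c rho) <= ((2 * rho) ^+ d)%:E)%E.
Proof.
move=> hmu c rho r0.
rewrite -(L4_box_meas mu hmu [tuple tnth c j - rho | j < d]); last lra.
apply: le_measure.
- by rewrite inE; exact: L4_measurable_ball.
- by rewrite inE; exact: L4_measurable_box2.
exact: L4_ball_sub_box.
Qed.

Lemma L4_box_in_ball (c : pt) (rho : R) : (1 <= d)%N -> 0 < rho ->
  forall y : pt, (forall i, tnth c i - rho / (2 * d%:R) <= tnth y i < tnth c i + rho / (2 * d%:R)) ->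
  ballS c rho y.
Proof.
move=> d1 r0 y H; rewrite L4_ballSE //=.
set s := rho / (2 * d%:R).
have D1 : 1 <= d%:R :> R by rewrite ler1n.
have Ds : d%:R * s = rho / 2 by rewrite /s; field; lra.
have s0 : 0 < s by rewrite /s divr_gt0 //; lra.
have sle : s <= rho / 2 by nra.
apply: (@le_lt_trans _ _ (d%:R * s ^+ 2)).
  have -> : d%:R * s ^+ 2 = \sum_(i < d) s ^+ 2 by rewrite sumr_const card_ord mulr_natl.
  rewrite /L4_sqd; apply: ler_sum => i _.
  move: (H i); rewrite -/s => /andP [h1 h2].
  have h3 : 0 <= (s - (tnth y i - tnth c i)) * (s + (tnth y i - tnth c i)).
    by apply: mulr_ge0; lra.
  nra.
nra.
Qed.

Lemma L4_ball_ge (mu : {measure set pt -> \bar R}) : is_lebesgue mu ->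
  forall (c : pt) (rho : R), (1 <= d)%N -> 0 < rho ->
  (((rho / d%:R) ^+ d)%:E <= mu (ballS c rho))%E.
Proof.
move=> hmu c rho d1 r0.
have D1 : 1 <= d%:R :> R by rewrite ler1n.
set s := rho / (2 * d%:R).
have e : rho / d%:R = 2 * s by rewrite /s; field; lra.
have s0 : 0 < s by rewrite /s divr_gt0 //; lra.
rewrite e -(L4_box_meas mu hmu [tuple tnth c j - s | j < d]); last lra.
apply: le_measure.
- by rewrite inE; exact: L4_measurable_box2.
- by rewrite inE; exact: L4_measurable_ball.
move=> y /= H; apply: L4_box_in_ball => // i.
have := H i; rewrite tnth_mktuple => /andP [h1 h2]; apply/andP; split; rewrite -/s; lra.
Qed.


Lemma L4_maxim (mu : {measure set pt -> \bar R}) alpha f (c : pt) r :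
  (inBc mu alpha f c r \/ inBu mu alpha f c r) ->
  0 < r /\ forall rho, r < rho -> bval mu alpha f c rho <= bval mu alpha f c r.
Proof.
case=> [[x [-> r0 e _]] | [x [r0 hx e _]]]; split=> // rho hr.
- rewrite -lee_fin e; apply: ereal_sup_ubound; exists rho => //=.
  exact: lt_trans r0 hr.
- rewrite -lee_fin e; apply: ereal_sup_ubound; exists (c, rho) => //=.
  split; first exact: lt_trans r0 hr.
  rewrite /ballS /=; exact: le_lt_trans hx hr.
Qed.

Lemma L4_fine_bnd (x : \bar R) (a b : R) : (a%:E <= x <= b%:E)%E -> a <= fine x <= b.
Proof.
move=> /andP [h1 h2]; case: x h1 h2 => [x||] /= h1 h2.
- by rewrite -!lee_fin h1 h2.
- by move: h2; rewrite leNgt ltey.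
- by move: h1; rewrite leNgt ltNye.
Qed.

Lemma L4_fine_mono (x y : \bar R) : (0 <= x)%E -> (x <= y)%E -> (y < +oo)%E ->
  0 <= fine x <= fine y.
Proof.
case: x => [x||]; case: y => [y||] //= h1 h2 h3.
all: try by rewrite -!lee_fin h1 h2.
all: try by move: h2; rewrite leNgt ?ltNye ?ltey.
all: try by move: h1; rewrite leNgt ?ltNye ?ltey.
Qed.

Lemma L4_aux_ineq (C X IQ L : R) : 0 < C -> 0 < L -> X * L <= C * IQ -> C^-1 * X <= IQ / L.
Proof.
move=> C0 L0 h; rewrite -(ler_pM2l C0) -(ler_pM2r L0).
have e1 : C * (C^-1 * X) * L = X * L by field; rewrite gt_eqF.
have e2 : C * (IQ / L) * L = C * IQ by field; rewrite gt_eqF.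
by rewrite e1 e2.
Qed.

End Helpers.
Arguments L4_maxim {R d mu alpha f c r}.
Arguments L4_box_in_ball {R d c rho}.
Arguments L4_cube_meas {R d mu}.
Arguments L4_ball_le {R d mu}.
Arguments L4_ball_ge {R d mu}.
Arguments L4_measurable_ball {R d}.
Arguments L4_measurable_box2 {R d}.
Arguments L4_aux_ineq {R}.
Arguments L4_fine_mono {R x y}.
Arguments L4_fine_bnd {R x a b}.
Arguments L4_ballSE {R d}.
Arguments L4_term_le_sq {R d}.
Arguments L4_sqd {R d}.

Theorem lemma4p2 (R : realType) (d : nat) (Cd : R) :
  exists C : R, 0 < C /\
  forall (t : 'I_(3 ^ d) -> d.-tuple R),
  (forall (c : d.-tuple R) (r : R), 0 < r ->
     exists Q, [/\ in_D t Q, ballS c r `<=` cubeS Q.1 Q.2 & Q.2 <= Cd * r]) ->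
  forall QB : d.-tuple R -> R -> d.-tuple R * R,
  (forall (c : d.-tuple R) (r : R), 0 < r ->
     [/\ in_D t (QB c r), ballS c r `<=` cubeS (QB c r).1 (QB c r).2 &
         (QB c r).2 <= Cd * r]) ->
  forall (mu : {measure set (d.-tuple R) -> \bar R}), is_lebesgue mu ->
  forall (alpha : R), 0 < alpha < d%:R ->
  forall f : d.-tuple R -> R, L1loc mu f ->
  forall (c : d.-tuple R) (r : R),
    inBc mu alpha f c r \/ inBu mu alpha f c r ->
    let Q := QB c r in
    [/\ C^-1 * avg mu f (ballS c r) <= avg mu f (cubeS Q.1 Q.2),
        avg mu f (cubeS Q.1 Q.2) <= C * avg mu f (ballS c r),
        C^-1 * r <= Q.2 & Q.2 <= C * r].
Proof.
set K := 4 * (d%:R + 1) * (`|Cd| + 1).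
have Cdn : Cd <= `|Cd| by apply: ler_norm.
have Cdn0 : 0 <= `|Cd| by [].
have D0 : 0 <= d%:R :> R by [].
have K1 : 1 <= K by rewrite /K; nra.
have K0 : 0 < K by lra.
exists (K ^+ d); split; first exact: exprn_gt0.
move=> t _ QB hQB mu hmu alpha /andP [a0 ad] f [mf fint] c r hB Q.
rewrite {}/Q.
have [r0 hmax] := L4_maxim hB.
have d1 : (0 < d)%N by rewrite -(ltr0n R); exact: lt_trans a0 ad.
have D1 : 1 <= d%:R :> R by rewrite ler1n.
have KD : d%:R * Cd <= K by rewrite /K; nra.
have KCd : Cd <= K by rewrite /K; nra.
have K4 : 4 * d%:R <= K by rewrite /K; nra.
have KK : K <= K ^+ d by apply: ler_eXnr.
move: (hQB c r r0); case: (QB c r) => a l /= [_ hsub hl].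
set D := d%:R : R.
set s := r / (2 * D).
have s0 : 0 < s by rewrite /s divr_gt0 //; lra.
have rs : r = 2 * D * s by rewrite /s; field; lra.
pose p1 : d.-tuple R := [tuple tnth c j - s | j < d].
pose p2 : d.-tuple R := [tuple tnth c j + s / 2 | j < d].
have hp1 : ballS c r p1.
  apply: L4_box_in_ball => // i; rewrite tnth_mktuple -/D -/s; apply/andP; split; lra.
have hp2 : ballS c r p2.
  apply: L4_box_in_ball => // i; rewrite tnth_mktuple -/D -/s; apply/andP; split; lra.
pose i0 : 'I_d := Ordinal d1.
have ls : s < l.
  have := hsub _ hp1 i0; have := hsub _ hp2 i0; rewrite /p1 /p2 !tnth_mktuple.
  move=> /andP [h1 h2] /andP [h3 h4]; lra.
have l0 : 0 < l by lra.
have hcc : cubeS a l c.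
  apply: (hsub c); rewrite (L4_ballSE c r) //= /L4_sqd big1 ?exprn_gt0 // => i _.
  by rewrite subrr expr2 mul0r.
set rho := 2 * D * l.
have rho0 : 0 < rho by rewrite /rho; nra.
have hr : r < rho by rewrite rs /rho; nra.
have hQB' : cubeS a l `<=` ballS c rho.
  move=> y hy; rewrite (L4_ballSE c rho) //=.
  apply: (@le_lt_trans _ _ (D * l ^+ 2)); last by rewrite /rho; nra.
  have -> : D * l ^+ 2 = \sum_(i < d) l ^+ 2 by rewrite sumr_const card_ord mulr_natl.
  rewrite /L4_sqd; apply: ler_sum => i _.
  move: (hy i) (hcc i) => /andP [h1 h2] /andP [h3 h4].
  have h5 : 0 <= (l - (tnth y i - tnth c i)) * (l + (tnth y i - tnth c i)).
    by apply: mulr_ge0; lra.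
  nra.
pose g := fun y : d.-tuple R => (`|f y|)%:E.
have mB := L4_measurable_ball c r r0.
have mB' := L4_measurable_ball c rho rho0.
have mQ : measurable (cubeS a l) := L4_measurable_box2 a l.
have mg : forall A, measurable_fun A g.
  move=> A; apply/measurable_EFinP; apply: measurableT_comp.
    exact: normr_measurable.
  exact: (measurable_funS measurableT (subsetT A) mf).
have g0 : forall y, (0 <= g y)%E by move=> y; rewrite lee_fin.
have finB' : (\int[mu]_(y in ballS c rho) g y < +oo)%E.
  by have /integrableP [_ fin] := fint c rho rho0; exact: fin.
have i1 : (\int[mu]_(y in ballS c r) g y <= \int[mu]_(y in cubeS a l) g y)%E.
  by apply: ge0_subset_integral => //.
have i2 : (\int[mu]_(y in cubeS a l) g y <= \int[mu]_(y in ballS c rho) g y)%E.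
  by apply: ge0_subset_integral => //.
have /andP [IB0 IBQ] := L4_fine_mono (integral_ge0 _ (fun y _ => g0 y)) i1 (le_lt_trans i2 finB').
have /andP [IQ0 IQB'] := L4_fine_mono (integral_ge0 _ (fun y _ => g0 y)) i2 finB'.
have /andP [mBlo mBhi] := L4_fine_bnd (introT andP (conj (L4_ball_ge hmu c r d1 r0) (L4_ball_le hmu c r r0))).
have /andP [mB'lo mB'hi] := L4_fine_bnd (introT andP (conj (L4_ball_ge hmu c rho d1 rho0) (L4_ball_le hmu c rho rho0))).
have mQe : fine (mu (cubeS a l)) = l ^+ d by rewrite (L4_cube_meas hmu a l (ltW l0)).
have hm := hmax rho hr; rewrite /bval /avg in hm.
rewrite /avg mQe.
rewrite /g in IB0 IBQ IQ0 IQB'.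
move: IB0 IBQ IQ0 IQB' mBlo mBhi mB'lo mB'hi hm.
set IB := fine (\int[mu]_(x in ballS c r) `|f x|%:E).
set IQ := fine (\int[mu]_(x in cubeS a l) `|f x|%:E).
set IB' := fine (\int[mu]_(x in ballS c rho) `|f x|%:E).
set m := fine (mu (ballS c r)).
set m' := fine (mu (ballS c rho)).
move=> IB0 IBQ IQ0 IQB' mBlo mBhi mB'lo mB'hi hm.
have pr0 : 0 < r `^ alpha := powR_gt0 alpha r0.
have pR0 : 0 < rho `^ alpha := powR_gt0 alpha rho0.
have prR : r `^ alpha <= rho `^ alpha.
  by apply: ge0_ler_powR; rewrite ?nnegrE; [exact: ltW | exact: ltW | exact: ltW | exact: ltW].
have m0 : 0 < m.
  by apply: lt_le_trans mBlo; apply: exprn_gt0; rewrite divr_gt0 //; lra.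
have m'0 : 0 < m'.
  by apply: lt_le_trans mB'lo; apply: exprn_gt0; rewrite divr_gt0 //; lra.
set X := IB / m.
set X' := IB' / m'.
have X0 : 0 <= X by rewrite /X divr_ge0 // ltW.
have hX : X' <= X.
  rewrite -(ler_pM2l pR0); apply: (le_trans hm). rewrite -/X; by apply: ler_wpM2r.
have IB'e : IB' = X' * m' by rewrite /X' divfK // gt_eqF.
have IBe : IB = X * m by rewrite /X divfK // gt_eqF.
have ld0 : 0 < l ^+ d by apply: exprn_gt0.
have Kd0 : 0 < K ^+ d by apply: exprn_gt0.
split.
- apply: L4_aux_ineq => //.
  apply: (@le_trans _ _ (X * (Cd * r) ^+ d)).
    apply: ler_wpM2l => //; apply: lerXn2r; rewrite ?nnegrE; lra.
  have e : Cd * r = (D * Cd) * (r / D) by rewrite /D; field; lra.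
  apply: (@le_trans _ _ (X * (K * (r / D)) ^+ d)).
    apply: ler_wpM2l => //; apply: lerXn2r; rewrite ?nnegrE; first lra.
      by rewrite mulr_ge0 // ?divr_ge0; lra.
    rewrite e; apply: ler_wpM2r; first by rewrite divr_ge0; lra.
    exact: KD.
  rewrite exprMn mulrCA; apply: ler_wpM2l; first lra.
  apply: (le_trans _ IBQ); rewrite IBe; by apply: ler_wpM2l.
- rewrite ler_pdivrMr //.
  apply: (le_trans IQB'); rewrite IB'e.
  apply: (@le_trans _ _ (X * m')); first by apply: ler_wpM2r => //; exact: ltW.
  apply: (@le_trans _ _ (X * (2 * rho) ^+ d)); first by apply: ler_wpM2l.
  have -> : 2 * rho = (4 * D) * l by rewrite /rho; ring.
  rewrite exprMn mulrA; apply: ler_wpM2r; first exact: ltW.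
  rewrite mulrC; apply: ler_wpM2r => //; apply: lerXn2r; rewrite ?nnegrE; lra.
- rewrite ler_pdivrMl //.
  have h : K * l <= K ^+ d * l by apply: ler_wpM2r => //; exact: ltW.
  nra.
- have h1 : Cd * r <= K * r by apply: ler_wpM2r => //; exact: ltW.
  have h2 : K * r <= K ^+ d * r by apply: ler_wpM2r => //; exact: ltW.
  lra.
Qed.
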